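(* Let $a>0$ and $T>0$, let $c=\ln 2$, and let $W_0$ denote the principal branch of the Lambert W function. For $\lambda>0$ define $$P(\lambda)=\frac{2}{\lambda c^2}\,W_0\!\left(\frac{\lambda c^2}{2a}\,2^{T}\right)-\frac1a.$$ Then $P(\lambda)$ is strictly decreasing in $\lambda$ on $(0,\infty)$.
   Context: The Lambert W function is the inverse relation of $w\mapsto we^w$; its principal branch $W_0$ is the real-valued branch on $[-1/e,\infty)$ with $W_0\ge -1$, so for $z\ge 0$, $W_0(z)$ is the unique $w\ge 0$ with $we^w=z$. *)

(* Defs.v *)
From Stdlib Require Import Reals ClassicalEpsilon.
Open Scope R_scope.

(* Principal branch W_0 of the Lambert W function on [-1/e, +oo):
   W_0 z is the (unique) w >= -1 with w * exp w = z.  Defined by Hilbert's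
   epsilon; its value outside [-1/e, +oo) is irrelevant/unspecified. *)
Definition LambertW0 (z : R) : R :=
  epsilon (inhabits 0%R) (fun w : R => -1 <= w /\ w * exp w = z).

Definition P (a T lambda : R) : R :=
  let c := ln 2 in
  2 / (lambda * c ^ 2) * LambertW0 (lambda * c ^ 2 / (2 * a) * Rpower 2 T) - 1 / a.

(* Main.v *)
Require Import Defs.
From Stdlib Require Import Reals Lra ClassicalEpsilon.
Open Scope R_scope.

Lemma W_ex (x : R) : 0 < x -> exists w, -1 <= w /\ w * exp w = x.
Proof.
  intros hx.
  destruct (IVT (fun w => w * exp w - x) 0 x) as [z [hz1 hz2]].
  - apply continuity_minus; [|apply continuity_const; intros ? ?; reflexivity].
    apply continuity_mult; [apply derivable_continuous, derivable_id | apply derivable_continuous, derivable_exp].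
  - exact hx.
  - rewrite Rmult_0_l; lra.
  - assert (1 < exp x) by (rewrite <- exp_0; apply exp_increasing; lra).
    assert (x * 1 < x * exp x) by (apply Rmult_lt_compat_l; lra). lra.
  - exists z; split; lra.
Qed.

Lemma W_spec (x : R) : 0 < x -> 0 < LambertW0 x /\ LambertW0 x * exp (LambertW0 x) = x.
Proof.
  intros hx.
  destruct (epsilon_spec (inhabits 0%R) (fun w : R => -1 <= w /\ w * exp w = x) (W_ex x hx)) as [h1 h2].
  fold (LambertW0 x) in h1, h2. split; [|exact h2].
  destruct (Rle_or_lt (LambertW0 x) 0) as [h|h]; [|exact h].
  assert (LambertW0 x * exp (LambertW0 x) <= 0).
  { assert (0 < exp (LambertW0 x)) by apply exp_pos. nra. }
  lra.
Qed.

Lemma W_mono (x1 x2 : R) : 0 < x1 -> x1 < x2 -> LambertW0 x1 < LambertW0 x2.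
Proof.
  intros h1 h12.
  destruct (W_spec x1 h1) as [p1 e1]. destruct (W_spec x2 ltac:(lra)) as [p2 e2].
  destruct (Rlt_or_le (LambertW0 x1) (LambertW0 x2)) as [h|h]; [exact h|].
  exfalso.
  assert (exp (LambertW0 x2) <= exp (LambertW0 x1)).
  { destruct h as [h|h]; [left; apply exp_increasing; exact h | rewrite h; right; reflexivity]. }
  assert (LambertW0 x2 * exp (LambertW0 x2) <= LambertW0 x1 * exp (LambertW0 x1)).
  { apply Rmult_le_compat; try lra; left; apply exp_pos. }
  lra.
Qed.

Theorem lemma1 (a T : R) (ha : 0 < a) (hT : 0 < T) :
  forall l1 l2 : R, 0 < l1 -> l1 < l2 -> P a T l2 < P a T l1.
Proof.
  intros l1 l2 h1 h12. unfold P.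
  set (c := ln 2).
  assert (hc : 0 < c) by (unfold c; rewrite <- ln_1; apply ln_increasing; lra).
  set (k := c ^ 2 / (2 * a) * Rpower 2 T).
  assert (hk : 0 < k).
  { unfold k. apply Rmult_lt_0_compat; [|apply exp_pos].
    unfold Rdiv; apply Rmult_lt_0_compat; [apply pow_lt; lra| apply Rinv_0_lt_compat; lra]. }
  assert (E : forall l, 0 < l -> 2 / (l * c ^ 2) * LambertW0 (l * c ^ 2 / (2 * a) * Rpower 2 T)
                = 2 * k / c ^ 2 / exp (LambertW0 (l * c ^ 2 / (2 * a) * Rpower 2 T))).
  { intros l hl.
    replace (l * c ^ 2 / (2 * a) * Rpower 2 T) with (l * k) by (unfold k; field; lra).
    destruct (W_spec (l * k) ltac:(apply Rmult_lt_0_compat; lra)) as [p e].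
    set (w := LambertW0 (l * k)) in *.
    assert (0 < exp w) by apply exp_pos.
    assert (hk2 : k = w * exp w / l) by (rewrite e; field; lra). rewrite hk2. field. repeat split; try lra. }
  rewrite (E l1 h1), (E l2 ltac:(lra)).
  replace (l1 * c ^ 2 / (2 * a) * Rpower 2 T) with (l1 * k) by (unfold k; field; lra).
  replace (l2 * c ^ 2 / (2 * a) * Rpower 2 T) with (l2 * k) by (unfold k; field; lra).
  assert (hw : LambertW0 (l1 * k) < LambertW0 (l2 * k)).
  { apply W_mono; [apply Rmult_lt_0_compat; lra| apply Rmult_lt_compat_r; lra]. }
  assert (he : exp (LambertW0 (l1 * k)) < exp (LambertW0 (l2 * k))) by (apply exp_increasing; exact hw).
  assert (hA : 0 < 2 * k / c ^ 2).
  { unfold Rdiv; apply Rmult_lt_0_compat; [lra| apply Rinv_0_lt_compat, pow_lt; lra]. }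
  assert (0 < exp (LambertW0 (l1 * k))) by apply exp_pos.
  unfold Rdiv at 2 4.
  apply Rplus_lt_compat_r.
  apply Rmult_lt_compat_l; [exact hA|].
  apply Rinv_lt_contravar; [apply Rmult_lt_0_compat; apply exp_pos|exact he].
Qed.
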